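(* Fix $w\in(0,1]$, $b>0$ and $c\in\mathbb{R}$, and let $\delta(x;w,b,c)$ be the posterior median for the normal slab. Then $$\delta(x;w,b,c)-\frac{x/b^2+c}{1/b^2+1}\to0\quad\text{as }|x|\to+\infty.$$
   Context: Consider the model $X\mid\mu\sim N(\mu,1)$ with prior $\mu\sim(1-w)\delta_0+w\,\gamma(\cdot;b,c)$, where $\delta_0$ is the point mass at $0$, $w\in[0,1]$, and $\gamma(\mu;b,c)=\frac{b}{\sqrt{2\pi}}\exp\{-b^2(\mu-c)^2/2\}$ (the $N(c,1/b^2)$ density) with $b>0$, $c\in\mathbb{R}$. $\delta(x;w,b,c)$ denotes the median of the posterior distribution of $\mu$ given $X=x$. *)

(* Defs.v *)
From Stdlib Require Import Reals Lra.
Open Scope R_scope.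

Definition phi (z : R) : R := exp (- (z ^ 2) / 2) / sqrt (2 * PI).

Definition gam (b c mu : R) : R :=
  b / sqrt (2 * PI) * exp (- (b ^ 2 * (mu - c) ^ 2) / 2).

Definition lower_int (f : R -> R) (t I : R) : Prop :=
  forall eps, 0 < eps -> exists A, forall a, a <= A ->
    exists pr : Riemann_integrable f a t, Rabs (RiemannInt pr - I) < eps.

Definition upper_int (f : R -> R) (t I : R) : Prop :=
  forall eps, 0 < eps -> exists B, forall bb, B <= bb ->
    exists pr : Riemann_integrable f t bb, Rabs (RiemannInt pr - I) < eps.

Definition slab_joint (b c x : R) (mu : R) : R := phi (x - mu) * gam b c mu.

Definition ind {P : Prop} (p : {P} + {~ P}) : R := if p then 1 else 0.

(* m is a median of the posterior of mu given X = x, under the prior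
   (1-w) delta_0 + w gamma(.; b, c), with X | mu ~ N(mu, 1):
   P(mu <= m | x) >= 1/2 and P(mu >= m | x) >= 1/2, where by Bayes
   P(mu <= m | x) = ((1-w) phi(x) 1{0 <= m} + w int_{-oo}^m phi(x-mu) gam(mu) dmu) / marg,
   P(mu >= m | x) = ((1-w) phi(x) 1{0 >= m} + w int_m^{oo} phi(x-mu) gam(mu) dmu) / marg,
   marg = (1-w) phi(x) + w int_R phi(x-mu) gam(mu) dmu. *)
Definition is_posterior_median (w b c x m : R) : Prop :=
  exists L U L0 U0 : R,
    lower_int (slab_joint b c x) m L /\
    upper_int (slab_joint b c x) m U /\
    lower_int (slab_joint b c x) 0 L0 /\
    upper_int (slab_joint b c x) 0 U0 /\
    let marg := (1 - w) * phi x + w * (L0 + U0) in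
    ((1 - w) * phi x * ind (Rle_dec 0 m) + w * L) / marg >= 1 / 2 /\
    ((1 - w) * phi x * ind (Rle_dec m 0) + w * U) / marg >= 1 / 2.

(* Main.v *)
Require Import Defs.
From Stdlib Require Import Reals Lra Psatz.
From Coquelicot Require Import Coquelicot.
Open Scope R_scope.

Lemma exp_mono_le a b : a <= b -> exp a <= exp b.
Proof.
  intros H; destruct (Req_dec a b) as [->|Hn]; [lra|].
  left; apply exp_increasing; lra.
Qed.

Definition Mx (b c x : R) := (x / b ^ 2 + c) / (1 / b ^ 2 + 1).

Lemma f_form b c x mu : 0 < b ->
  slab_joint b c x mu = b / (2 * PI) *
   exp (- ((1 + b^2) * (mu - Mx b c x)^2) / 2) *
   exp (- (b^2 * (x - c)^2) / (2 * (1 + b^2))).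
Proof.
  intros hb. unfold slab_joint, phi, gam.
  assert (hs : sqrt (2*PI) * sqrt (2*PI) = 2 * PI) by (apply sqrt_sqrt; pose proof PI_RGT_0; lra).
  assert (hs0 : 0 < sqrt (2*PI)) by (apply sqrt_lt_R0; pose proof PI_RGT_0; lra).
  replace (b / (2 * PI)) with (b / (sqrt (2 * PI) * sqrt (2 * PI))) by (rewrite hs; reflexivity).
  replace (exp (- (x - mu) ^ 2 / 2) / sqrt (2 * PI) *
    (b / sqrt (2 * PI) * exp (- (b ^ 2 * (mu - c) ^ 2) / 2)))
  with (b / (sqrt (2 * PI) * sqrt (2 * PI)) * (exp (- (x - mu) ^ 2 / 2) * exp (- (b ^ 2 * (mu - c) ^ 2) / 2)))
  by (field; lra).
  rewrite (Rmult_assoc (b / _)), <- !exp_plus. f_equal. f_equal. unfold Mx.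
  field. split; nra.
Qed.

Lemma f_pos b c x mu : 0 < b -> 0 < slab_joint b c x mu.
Proof.
  intros hb; rewrite f_form by lra.
  pose proof PI_RGT_0.
  apply Rmult_lt_0_compat; [apply Rmult_lt_0_compat|]; try apply exp_pos.
  apply Rdiv_lt_0_compat; lra.
Qed.

Lemma f_sym b c x y : 0 < b ->
  slab_joint b c x (2 * Mx b c x - y) = slab_joint b c x y.
Proof.
  intros hb; rewrite !f_form by lra. replace ((2 * Mx b c x - y - Mx b c x) ^ 2) with ((y - Mx b c x) ^ 2) by ring. reflexivity.
Qed.

Lemma f_ex b c x a a' : ex_RInt (slab_joint b c x) a a'.
Proof.
  apply (@ex_RInt_continuous R_CompleteNormedModule); intros z _.
  apply (@ex_derive_continuous R_AbsRing R_NormedModule). unfold slab_joint, phi, gam. auto_derive. auto.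
Qed.

Lemma I_sym b c x a : 0 < b ->
  RInt (slab_joint b c x) a (Mx b c x) = RInt (slab_joint b c x) (Mx b c x) (2 * Mx b c x - a).
Proof.
  intros hb. set (M := Mx b c x). set (f := slab_joint b c x).
  pose proof (RInt_comp_lin f (-1) (2*M) a M (f_ex b c x _ _)) as H.
  rewrite (RInt_ext (fun y => scal (-1) (f (-1 * y + 2 * M))) (fun y => scal (-1) (f y))) in H.
  2:{ intros y _. f_equal.
      replace (-1 * y + 2 * M) with (2 * M - y) by ring. apply f_sym; auto. }
  pose proof (RInt_scal f a M (-1) (f_ex b c x a M)) as H2.
  unfold scal in H, H2; simpl in H, H2; unfold mult in H, H2; simpl in H, H2.
  rewrite H2 in H.
  replace (-1 * a + 2 * M) with (2 * M - a) in H by ring.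
  replace (-1 * M + 2 * M) with M in H by ring.
  pose proof (opp_RInt_swap f M (2*M-a) (f_ex b c x _ _)) as H3.
  unfold opp in H3; simpl in H3. lra.
Qed.

Lemma low_RInt f t L : lower_int f t L ->
  forall e, 0 < e -> exists A, forall a, a <= A -> Rabs (RInt f a t - L) < e.
Proof.
  intros H e he; destruct (H e he) as [A HA]; exists A; intros a ha.
  destruct (HA a ha) as [pr Hp]; rewrite (RInt_Reals f a t pr); auto.
Qed.

Lemma up_RInt f t L : upper_int f t L ->
  forall e, 0 < e -> exists A, forall a, A <= a -> Rabs (RInt f t a - L) < e.
Proof.
  intros H e he; destruct (H e he) as [A HA]; exists A; intros a ha.
  destruct (HA a ha) as [pr Hp]; rewrite (RInt_Reals f t a pr); auto.
Qed.

Lemma chas b c x p q r : RInt (slab_joint b c x) p q + RInt (slab_joint b c x) q r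
  = RInt (slab_joint b c x) p r.
Proof. apply (RInt_Chasles (slab_joint b c x)); apply f_ex. Qed.

Lemma I_nonneg b c x p q : 0 < b -> p <= q -> 0 <= RInt (slab_joint b c x) p q.
Proof.
  intros hb hpq; apply RInt_ge_0; auto. apply f_ex. intros; left; apply f_pos; auto.
Qed.

Lemma I_lower b c x p q g : 0 < b -> p <= q ->
  (forall y, p < y < q -> g <= slab_joint b c x y) ->
  (q - p) * g <= RInt (slab_joint b c x) p q.
Proof.
  intros hb hpq H.
  assert (E : RInt (fun _ => g) p q = (q - p) * g) by (rewrite RInt_const; reflexivity).
  rewrite <- E. apply RInt_le; auto. apply ex_RInt_const. apply f_ex.
Qed.

Lemma mult_ge_half X mg : mg > 0 -> X / mg >= 1 / 2 -> X >= mg / 2.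
Proof.
  intros hm h. replace X with (X / mg * mg) by (field; lra). nra.
Qed.

Theorem mainTheorem4 (w b c : R) (hw : 0 < w <= 1) (hb : 0 < b)
  (delta : R -> R)
  (hdelta : forall x : R, is_posterior_median w b c x (delta x)) :
  forall eps : R, 0 < eps -> exists K : R, forall x : R, K < Rabs x ->
    Rabs (delta x - (x / b ^ 2 + c) / (1 / b ^ 2 + 1)) < eps.
Proof.
  intros eps heps.
  pose proof PI_RGT_0 as hpi.
  set (s := sqrt (2 * PI)).
  assert (hs0 : 0 < s) by (apply sqrt_lt_R0; lra).
  set (g0 := b / (2 * PI) * exp (- ((1 + b ^ 2) * eps ^ 2) / 2)).
  assert (hg0 : 0 < g0).
  { unfold g0. apply Rmult_lt_0_compat; [apply Rdiv_lt_0_compat; lra| apply exp_pos]. }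
  set (C := 1 / (w * eps * g0 * s)).
  set (D := 2 * (1 + b ^ 2) * (Rabs C + 1) + b ^ 4 * c ^ 2 + b ^ 2 * c ^ 2).
  assert (hD : 0 <= D).
  { unfold D. pose proof (Rabs_pos C). assert (0 <= b^2) by nra. nra. }
  exists (Rabs (b ^ 2 * c) + sqrt D). intros x hx.
  change ((x / b ^ 2 + c) / (1 / b ^ 2 + 1)) with (Mx b c x).
  set (M := Mx b c x). set (f := slab_joint b c x).
  set (E := (x ^ 2 + 2 * b ^ 2 * c * x - b ^ 2 * c ^ 2) / (2 * (1 + b ^ 2))).
  assert (hE : E > Rabs C + 1).
  { assert (h1 : Rabs (x + b ^ 2 * c) > sqrt D).
    { pose proof (Rabs_triang (x + b^2 * c) (- (b^2 * c))) as T.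
      rewrite Rabs_Ropp in T. replace (x + b ^ 2 * c + - (b ^ 2 * c)) with x in T by ring. lra. }
    assert (h2 : (x + b ^ 2 * c) ^ 2 > D).
    { rewrite <- pow2_abs. pose proof (sqrt_sqrt D hD). pose proof (sqrt_pos D). nra. }
    assert (hq : E - (Rabs C + 1) = ((x + b ^ 2 * c) ^ 2 - D) / (2 * (1 + b ^ 2))).
    { unfold E, D. field. nra. }
    assert (0 < ((x + b ^ 2 * c) ^ 2 - D) / (2 * (1 + b ^ 2))).
    { apply Rdiv_lt_0_compat; nra. }
    lra. }
  assert (hexpE : exp E > C).
  { pose proof (exp_ineq1_le E). pose proof (Rle_abs C). lra. }
  set (g := g0 * exp (- (b ^ 2 * (x - c) ^ 2) / (2 * (1 + b ^ 2)))).
  assert (hg : 0 < g) by (unfold g; apply Rmult_lt_0_compat; [lra | apply exp_pos]).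
  assert (hkey : w * eps * g > phi x).
  { set (q := exp (- x ^ 2 / 2)).
    assert (hq0 : 0 < q) by apply exp_pos.
    assert (hphi : phi x = q / s) by reflexivity.
    assert (hg' : g = g0 * (exp E * q)).
    { unfold g, q. rewrite <- exp_plus. f_equal. f_equal. unfold E. field. nra. }
    set (P := w * eps * g0 * s).
    assert (hP : 0 < P).
    { unfold P. apply Rmult_lt_0_compat; [|exact hs0].
      apply Rmult_lt_0_compat; [|exact hg0]. apply Rmult_lt_0_compat; lra. }
    assert (hPE : P * exp E > 1).
    { unfold C in hexpE. fold P in hexpE.
      apply (Rmult_lt_compat_l P) in hexpE; auto.
      replace (P * (1 / P)) with 1 in hexpE by (field; lra). lra. }
    rewrite hphi, hg'.
    assert (w * eps * (g0 * (exp E * q)) - q / s = (P * exp E - 1) * q / s)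
      by (unfold P; field; lra).
    assert (0 < (P * exp E - 1) * q / s).
    { apply Rdiv_lt_0_compat; [apply Rmult_lt_0_compat|]; lra. }
    lra. }
  assert (hfg : forall y, M - eps <= y <= M + eps -> g <= f y).
  { intros y hy. unfold f. rewrite f_form by lra. fold M. unfold g, g0.
    apply Rmult_le_compat_r; [left; apply exp_pos|].
    apply Rmult_le_compat_l; [left; apply Rdiv_lt_0_compat; lra|].
    apply exp_mono_le.
    assert ((y - M) ^ 2 <= eps ^ 2) by nra.
    assert (0 <= b^2) by nra.
    assert ((1 + b ^ 2) * (y - M) ^ 2 <= (1 + b ^ 2) * eps ^ 2) by nra.
    lra. }
  assert (hb1 : (M + eps - M) * g <= RInt f M (M + eps)).
  { apply I_lower; [lra|lra|]. intros; apply hfg; lra. }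
  assert (hb2 : (M - (M - eps)) * g <= RInt f (M - eps) M).
  { apply I_lower; [lra|lra|]. intros; apply hfg; lra. }
  replace (M + eps - M) with eps in hb1 by ring.
  replace (M - (M - eps)) with eps in hb2 by ring.
  assert (hphx : 0 < phi x) by (unfold phi; apply Rdiv_lt_0_compat; [apply exp_pos|apply sqrt_lt_R0; lra]).
  set (m := delta x).
  destruct (hdelta x) as [L [U [L0 [U0 [hL [hU [hL0 [hU0 [h1 h2]]]]]]]]].
  fold m in hL, hU, h1, h2. fold f in hL, hU, hL0, hU0.
  cbv zeta in h1, h2.
  destruct (Rlt_or_le (Rabs (m - M)) eps) as [Hok | Hbad]; [exact Hok | exfalso].
  assert (Hc : M + eps <= m \/ m <= M - eps).
  { unfold Rabs in Hbad; destruct (Rcase_abs (m - M)); lra. }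
  destruct Hc as [HA | HB].
  -
    assert (Hlim : forall dl, 0 < dl ->
      2 * RInt f M (M + eps) <= L0 + U0 - 2 * U + dl /\ 0 <= U + dl).
    { intros dl hdl.
      destruct (low_RInt _ _ _ hL0 (dl/4)) as [A0 HA0]; [lra|].
      destruct (up_RInt _ _ _ hU0 (dl/4)) as [B0 HB0]; [lra|].
      destruct (up_RInt _ _ _ hU (dl/4)) as [Bm HBm]; [lra|].
      set (T := Rmax (Rmax B0 Bm) (Rmax (2 * M - A0) m)).
      assert (T1 : B0 <= T) by (unfold T; eapply Rle_trans; [apply Rmax_l|apply Rmax_l]).
      assert (T2 : Bm <= T) by (unfold T; eapply Rle_trans; [apply Rmax_r|apply Rmax_l]).
      assert (T3 : 2 * M - A0 <= T) by (unfold T; eapply Rle_trans; [apply Rmax_l|apply Rmax_r]).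
      assert (T4 : m <= T) by (unfold T; eapply Rle_trans; [apply Rmax_r|apply Rmax_r]).
      specialize (HA0 (2 * M - T) ltac:(lra)). specialize (HB0 T T1). specialize (HBm T T2).
      apply Rabs_def2 in HA0. apply Rabs_def2 in HB0. apply Rabs_def2 in HBm.
      pose proof (chas b c x (2 * M - T) 0 T) as c1.
      pose proof (chas b c x (2 * M - T) M T) as c2.
      pose proof (I_sym b c x (2 * M - T) hb) as c3. fold M f in c3.
      replace (2 * M - (2 * M - T)) with T in c3 by ring.
      pose proof (chas b c x M (M + eps) m) as c4.
      pose proof (chas b c x M m T) as c5.
      pose proof (I_nonneg b c x (M + eps) m hb HA) as n1.
      pose proof (I_nonneg b c x m T hb T4) as n2.
      fold f in c1, c2, c4, c5, n1, n2.
      lra. }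
    assert (HS : 2 * RInt f M (M + eps) <= L0 + U0 - 2 * U).
    { apply Rle_plus_epsilon; intros; apply Hlim; auto. }
    assert (HU : 0 <= U).
    { apply Rle_plus_epsilon; intros; pose proof (Hlim eps0 H); lra. }
    assert (Hmarg : (1 - w) * phi x + w * (L0 + U0) > 0).
    { assert (0 <= (1 - w) * phi x) by (apply Rmult_le_pos; lra).
      assert (0 < w * (L0 + U0)) by (apply Rmult_lt_0_compat; nra). lra. }
    apply mult_ge_half in h2; auto.
    assert (hi : Defs.ind (Rle_dec m 0) <= 1) by (unfold Defs.ind; destruct (Rle_dec m 0); lra).
    assert (hi0 : 0 <= Defs.ind (Rle_dec m 0)) by (unfold Defs.ind; destruct (Rle_dec m 0); lra).
    assert (e1 : (1 - w) * phi x * Defs.ind (Rle_dec m 0) <= (1 - w) * phi x).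
    { assert (0 <= (1 - w) * phi x) by (apply Rmult_le_pos; lra). nra. }
    assert (e2 : w * (2 * RInt f M (M + eps)) <= w * (L0 + U0 - 2 * U))
      by (apply Rmult_le_compat_l; lra).
    assert (e3 : w * (eps * g) <= w * RInt f M (M + eps))
      by (apply Rmult_le_compat_l; lra).
    assert (e4 : (1 - w) * phi x <= phi x) by nra.
    assert (w * eps * g = w * (eps * g)) by ring.
    assert (w * (L0 + U0 - 2 * U) = w * (L0 + U0) - 2 * (w * U)) by ring.
    lra.
  -
    assert (Hlim : forall dl, 0 < dl ->
      2 * RInt f (M - eps) M <= L0 + U0 - 2 * L + dl /\ 0 <= L + dl).
    { intros dl hdl.
      destruct (low_RInt _ _ _ hL0 (dl/4)) as [A0 HA0]; [lra|].
      destruct (up_RInt _ _ _ hU0 (dl/4)) as [B0 HB0]; [lra|].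
      destruct (low_RInt _ _ _ hL (dl/4)) as [Am HAm]; [lra|].
      set (T := Rmax (Rmax B0 (2 * M - A0)) (Rmax (2 * M - Am) (2 * M - m))).
      assert (T1 : B0 <= T) by (unfold T; eapply Rle_trans; [apply Rmax_l|apply Rmax_l]).
      assert (T2 : 2 * M - A0 <= T) by (unfold T; eapply Rle_trans; [apply Rmax_r|apply Rmax_l]).
      assert (T3 : 2 * M - Am <= T) by (unfold T; eapply Rle_trans; [apply Rmax_l|apply Rmax_r]).
      assert (T4 : 2 * M - m <= T) by (unfold T; eapply Rle_trans; [apply Rmax_r|apply Rmax_r]).
      specialize (HA0 (2 * M - T) ltac:(lra)). specialize (HB0 T T1).
      specialize (HAm (2 * M - T) ltac:(lra)).
      apply Rabs_def2 in HA0. apply Rabs_def2 in HB0. apply Rabs_def2 in HAm.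
      pose proof (chas b c x (2 * M - T) 0 T) as c1.
      pose proof (chas b c x (2 * M - T) M T) as c2.
      pose proof (I_sym b c x (2 * M - T) hb) as c3. fold M f in c3.
      replace (2 * M - (2 * M - T)) with T in c3 by ring.
      pose proof (chas b c x (2 * M - T) m M) as c4.
      pose proof (chas b c x m (M - eps) M) as c5.
      pose proof (I_nonneg b c x m (M - eps) hb HB) as n1.
      pose proof (I_nonneg b c x (2 * M - T) m hb ltac:(lra)) as n2.
      fold f in c1, c2, c4, c5, n1, n2.
      lra. }
    assert (HS : 2 * RInt f (M - eps) M <= L0 + U0 - 2 * L).
    { apply Rle_plus_epsilon; intros; apply Hlim; auto. }
    assert (HL : 0 <= L).
    { apply Rle_plus_epsilon; intros; pose proof (Hlim eps0 H); lra. }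
    assert (Hmarg : (1 - w) * phi x + w * (L0 + U0) > 0).
    { assert (0 <= (1 - w) * phi x) by (apply Rmult_le_pos; lra).
      assert (0 < w * (L0 + U0)) by (apply Rmult_lt_0_compat; nra). lra. }
    apply mult_ge_half in h1; auto.
    assert (hi : Defs.ind (Rle_dec 0 m) <= 1) by (unfold Defs.ind; destruct (Rle_dec 0 m); lra).
    assert (hi0 : 0 <= Defs.ind (Rle_dec 0 m)) by (unfold Defs.ind; destruct (Rle_dec 0 m); lra).
    assert (e1 : (1 - w) * phi x * Defs.ind (Rle_dec 0 m) <= (1 - w) * phi x).
    { assert (0 <= (1 - w) * phi x) by (apply Rmult_le_pos; lra). nra. }
    assert (e2 : w * (2 * RInt f (M - eps) M) <= w * (L0 + U0 - 2 * L))
      by (apply Rmult_le_compat_l; lra).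
    assert (e3 : w * (eps * g) <= w * RInt f (M - eps) M)
      by (apply Rmult_le_compat_l; lra).
    assert (e4 : (1 - w) * phi x <= phi x) by nra.
    assert (w * eps * g = w * (eps * g)) by ring.
    assert (w * (L0 + U0 - 2 * L) = w * (L0 + U0) - 2 * (w * L)) by ring.
    lra.
Qed.
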